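(* The family of power-divergence copulas is negatively ordered: if $-\infty<\lambda_1<\lambda_2<\infty$, then $C_{\lambda_1}(u_1,u_2)\ge C_{\lambda_2}(u_1,u_2)$ for all $u_1,u_2\in[0,1]$.
   Context: For $\lambda\in\mathbb{R}$ define $\phi_\lambda$ on $[0,\infty)$ by $\phi_\lambda(x)=\frac{1}{\lambda(\lambda+1)}(x^{\lambda+1}-x+\lambda(1-x))$ for $\lambda\neq-1,0$; $\phi_0(x)=1-x+x\log x$; $\phi_{-1}(x)=x-1-\log x$; values at $x=0$ are limits, so $\phi_\lambda(0)=1/(\lambda+1)$ for $\lambda>-1$ and $\phi_\lambda(0)=\infty$ for $\lambda\le-1$. On $[0,1]$, $\phi_\lambda$ is convex, strictly decreasing, $\phi_\lambda(1)=0$. The pseudoinverse is $\phi_\lambda^{[-1]}(t)=\phi_\lambda^{-1}(t)$ (inverse of $\phi_\lambda|_{[0,1]}$) for $0\le t<\phi_\lambda(0)$ and $0$ for $t\ge\phi_\lambda(0)$. The power-divergence (PD) copula is $C_\lambda(u_1,u_2)=\phi_\lambda^{[-1]}(\phi_\lambda(u_1)+\phi_\lambda(u_2))$, $u_1,u_2\in[0,1]$ (with $\phi_\lambda^{[-1]}(\infty)=0$). *)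

(* Defs.v *)
From Stdlib Require Import Reals Lra Classical ClassicalEpsilon.
From Coquelicot Require Import Coquelicot.
Open Scope R_scope.

Definition phi_pos (lam x : R) : R :=
  if Req_EM_T lam 0 then 1 - x + x * ln x
  else if Req_EM_T lam (-1) then x - 1 - ln x
  else / (lam * (lam + 1)) * (Rpower x (lam + 1) - x + lam * (1 - x)).

(* phi_lambda on [0, infinity), with value at 0 given by the limit:
   1/(lam+1) if lam > -1, +infinity if lam <= -1. *)
Definition phi (lam x : R) : Rbar :=
  if Rlt_dec 0 x then Finite (phi_pos lam x)
  else if Rlt_dec (-1) lam then Finite (/ (lam + 1)) else p_infty.

(* inverse of phi_lambda restricted to [0,1], evaluated at t
   (a chosen x in [0,1] with phi lam x = t, when one exists; unique since
   phi_lambda is strictly decreasing on [0,1]). *)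
Definition phi_inv (lam t : R) : R :=
  match excluded_middle_informative
          (exists x, 0 <= x <= 1 /\ phi lam x = Finite t) with
  | left H => proj1_sig (constructive_indefinite_description _ H)
  | right _ => 0
  end.

Definition phi_pinv (lam : R) (t : Rbar) : R :=
  match t with
  | Finite r => if Rbar_lt_dec (Finite r) (phi lam 0) then phi_inv lam r else 0
  | _ => 0
  end.

Definition PD_copula (lam u1 u2 : R) : R :=
  phi_pinv lam (Rbar_plus (phi lam u1) (phi lam u2)).

(* Main.v *)
Require Import Defs.
From Stdlib Require Import Reals Lra Classical ClassicalEpsilon.
From Coquelicot Require Import Coquelicot.
Open Scope R_scope.

Definition D1 (lam x : R) : R :=
  if Req_EM_T lam 0 then ln x else (exp (lam * ln x) - 1) / lam.
Definition D2 (lam x : R) : R := exp (lam * ln x) / x.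

Lemma dphi lam x : 0 < x -> derivable_pt_lim (phi_pos lam) x (D1 lam x).
Proof.
  intro Hx. apply is_derive_Reals. unfold phi_pos, D1.
  destruct (Req_EM_T lam 0) as [H0|H0].
  - auto_derive; [lra|]. field. lra.
  - destruct (Req_EM_T lam (-1)) as [H1|H1].
    + subst. auto_derive; [lra|].
      replace (-1 * ln x) with (- ln x) by ring. rewrite exp_Ropp, exp_ln by lra. field. lra.
    + unfold Rpower. auto_derive; [lra|].
      replace ((lam + 1) * ln x) with (lam * ln x + ln x) by ring.
      rewrite exp_plus, exp_ln by lra.
      field. repeat split; intro; [lra|apply H0; lra|apply H1; lra].
Qed.

Lemma dD1 lam x : 0 < x -> derivable_pt_lim (D1 lam) x (D2 lam x).
Proof.
  intro Hx. apply is_derive_Reals. unfold D1, D2.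
  destruct (Req_EM_T lam 0) as [H0|H0].
  - subst. auto_derive; [lra|]. rewrite Rmult_0_l, exp_0. field. lra.
  - auto_derive; [lra|]. field. lra.
Qed.

Lemma phi_pos_1 lam : phi_pos lam 1 = 0.
Proof.
  unfold phi_pos, Rpower. rewrite ln_1. destruct (Req_EM_T lam 0); [ring|].
  destruct (Req_EM_T lam (-1)); [ring|]. rewrite Rmult_0_r, exp_0. ring.
Qed.

Lemma D1_1 lam : D1 lam 1 = 0.
Proof. unfold D1. rewrite ln_1. destruct (Req_EM_T lam 0); [reflexivity|].
  rewrite Rmult_0_r, exp_0. field. auto. Qed.

Lemma ln_neg x : 0 < x < 1 -> ln x < 0.
Proof. intros. rewrite <- ln_1. apply ln_increasing; lra. Qed.

Lemma D1_neg lam x : 0 < x < 1 -> D1 lam x < 0.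
Proof.
  intro Hx. pose proof (ln_neg x Hx). unfold D1. destruct (Req_EM_T lam 0); [lra|].
  destruct (Rlt_dec 0 lam).
  - assert (exp (lam * ln x) < 1). { rewrite <- exp_0. apply exp_increasing. nra. }
    unfold Rdiv. assert (0 < / lam) by (apply Rinv_0_lt_compat; lra). nra.
  - assert (1 < exp (lam * ln x)). { rewrite <- exp_0. apply exp_increasing. nra. }
    unfold Rdiv. assert (/ lam < 0) by (apply Rinv_lt_0_compat; lra). nra.
Qed.

Lemma phi_dec lam x y : 0 < x -> x < y -> y <= 1 -> phi_pos lam y < phi_pos lam x.
Proof.
  intros Hx Hxy Hy.
  destruct (MVT_cor2 (phi_pos lam) (D1 lam) x y Hxy) as [c [Hc1 Hc2]].
  - intros c Hc. apply dphi. lra.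
  - assert (D1 lam c < 0) by (apply D1_neg; lra). nra.
Qed.

Lemma phi_pos_pos lam x : 0 < x < 1 -> 0 < phi_pos lam x.
Proof. intros. rewrite <- (phi_pos_1 lam). apply phi_dec; lra. Qed.

Lemma phi_nonneg lam x : 0 < x <= 1 -> 0 <= phi_pos lam x.
Proof. intros. destruct (Req_dec x 1). subst; rewrite phi_pos_1; lra.
  left; apply phi_pos_pos; lra. Qed.

Lemma phi_cont lam x : 0 < x -> continuity_pt (phi_pos lam) x.
Proof. intro. apply derivable_continuous_pt. exists (D1 lam x). apply dphi; auto. Qed.

Lemma phi_lt0 lam x : -1 < lam -> 0 < x <= 1 -> phi_pos lam x < / (lam + 1).
Proof.
  intros Hl Hx. unfold phi_pos.
  assert (ln x <= 0). { destruct (Req_dec x 1). subst; rewrite ln_1; lra. left; apply ln_neg; lra. }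
  destruct (Req_EM_T lam 0) as [H0|H0].
  - subst. rewrite Rplus_0_l, Rinv_1. nra.
  - destruct (Req_EM_T lam (-1)) as [H1|H1]; [lra|].
    unfold Rpower. replace ((lam + 1) * ln x) with (lam * ln x + ln x) by ring.
    rewrite exp_plus, exp_ln by lra.
    set (E := exp (lam * ln x)).
    replace (/ (lam * (lam + 1)) * (E * x - x + lam * (1 - x)))
      with (/ (lam + 1) * ((E * x - x + lam * (1 - x)) / lam)) by (field; lra).
    assert (0 < / (lam + 1)) by (apply Rinv_0_lt_compat; lra).
    cut ((E * x - x + lam * (1 - x)) / lam < 1). { intro. nra. }
    destruct (Rlt_dec 0 lam).
    + assert (E <= 1). { unfold E. rewrite <- exp_0. destruct (Req_dec (lam * ln x) 0) as [->|]; [lra|].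
        left; apply exp_increasing. nra. }
      apply (Rmult_lt_reg_r lam); [lra|]. unfold Rdiv. rewrite Rmult_assoc, Rinv_l by lra. nra.
    + assert (1 <= E). { unfold E. rewrite <- exp_0. destruct (Req_dec (lam * ln x) 0) as [->|]; [lra|].
        left; apply exp_increasing. nra. }
      apply (Rmult_lt_reg_r (- lam)); [lra|]. unfold Rdiv.
      replace ((E * x - x + lam * (1 - x)) * / lam * - lam) with (-(E * x - x + lam * (1 - x))) by (field; lra).
      nra.
Qed.

Lemma cross a b K1 K2 x y : a < b -> 0 < K1 -> 0 < x -> x < y ->
  0 < K1 * D2 b x - K2 * D2 a x -> 0 < K1 * D2 b y - K2 * D2 a y.
Proof.
  intros Hab HK Hx Hxy H. unfold D2 in *.
  assert (E : forall z, 0 < z -> K1 * (exp (b * ln z) / z) - K2 * (exp (a * ln z) / z)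
      = exp (a * ln z) / z * (K1 * exp ((b - a) * ln z) - K2)).
  { intros z Hz. replace (b * ln z) with (a * ln z + (b - a) * ln z) by ring.
    rewrite exp_plus. field. lra. }
  rewrite E in H by lra. rewrite E by lra.
  assert (0 < exp (a * ln x) / x) by (apply Rdiv_lt_0_compat; [apply exp_pos|lra]).
  assert (0 < exp (a * ln y) / y) by (apply Rdiv_lt_0_compat; [apply exp_pos|lra]).
  assert (0 < K1 * exp ((b - a) * ln x) - K2).
  { apply (Rmult_lt_reg_l (exp (a * ln x) / x)); lra. }
  assert (exp ((b - a) * ln x) < exp ((b - a) * ln y)).
  { apply exp_increasing. apply Rmult_lt_compat_l; [lra|]. apply ln_increasing; lra. }
  apply Rmult_lt_0_compat; [lra|]. nra.
Qed.

Lemma ratio a b c u : a < b -> 0 < c -> c <= u -> u <= 1 ->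
  phi_pos b c * phi_pos a u <= phi_pos b u * phi_pos a c.
Proof.
  intros Hab Hc Hcu Hu.
  destruct (Req_dec c u) as [<-|Hcu']; [lra|].
  destruct (Req_dec u 1) as [->|Hu']; [rewrite !phi_pos_1; nra|].
  set (K1 := phi_pos a c). set (K2 := phi_pos b c).
  assert (HK1 : 0 < K1) by (apply phi_pos_pos; lra).
  set (h := fun x => K1 * phi_pos b x - K2 * phi_pos a x).
  set (h1 := fun x => K1 * D1 b x - K2 * D1 a x).
  set (h2 := fun x => K1 * D2 b x - K2 * D2 a x).
  assert (Dh : forall x, 0 < x -> derivable_pt_lim h x (h1 x)).
  { intros x Hx. unfold h, h1.
    apply (derivable_pt_lim_minus (mult_real_fct K1 (phi_pos b)) (mult_real_fct K2 (phi_pos a)));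
    apply derivable_pt_lim_scal; apply dphi; auto. }
  assert (Dh1 : forall x, 0 < x -> derivable_pt_lim h1 x (h2 x)).
  { intros x Hx. unfold h1, h2.
    apply (derivable_pt_lim_minus (mult_real_fct K1 (D1 b)) (mult_real_fct K2 (D1 a)));
    apply derivable_pt_lim_scal; apply dD1; auto. }
  assert (hc : h c = 0) by (unfold h, K1, K2; ring).
  assert (h1_ : h 1 = 0) by (unfold h; rewrite !phi_pos_1; ring).
  assert (h1'_ : h1 1 = 0) by (unfold h1; rewrite !D1_1; ring).
  apply Rnot_lt_le. intro Hneg.
  assert (hu : h u < 0) by (unfold h; fold K1 K2 in Hneg; lra).
  destruct (MVT_cor2 h h1 c u) as [x1 [E1 R1]]; [lra| intros; apply Dh; lra |].
  destruct (MVT_cor2 h h1 u 1) as [x2 [E2 R2]]; [lra| intros; apply Dh; lra |].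
  assert (hx1 : h1 x1 < 0) by nra.
  assert (hx2 : 0 < h1 x2) by nra.
  destruct (MVT_cor2 h1 h2 x2 1) as [x3 [E3 R3]]; [lra| intros; apply Dh1; lra |].
  destruct (MVT_cor2 h1 h2 x1 x2) as [x4 [E4 R4]]; [lra| intros; apply Dh1; lra |].
  assert (h2 x3 < 0) by nra.
  assert (0 < h2 x4) by nra.
  assert (0 < h2 x3). { unfold h2 in *. apply (cross a b K1 K2 x4 x3); auto; lra. }
  lra.
Qed.

Lemma phi_at lam x : 0 < x -> phi lam x = Finite (phi_pos lam x).
Proof. intro. unfold phi. destruct (Rlt_dec 0 x); [reflexivity|lra]. Qed.

Lemma phi_cases lam u : 0 <= u <= 1 ->
  phi lam u = p_infty \/ exists p, phi lam u = Finite p /\ 0 <= p.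
Proof.
  intro Hu. destruct (Req_dec u 0) as [->|Hu0].
  - unfold phi. destruct (Rlt_dec 0 0); [lra|].
    destruct (Rlt_dec (-1) lam); [|left; reflexivity]. right. eexists; split; [reflexivity|].
    left; apply Rinv_0_lt_compat; lra.
  - right. exists (phi_pos lam u). split; [apply phi_at; lra|]. apply phi_nonneg; lra.
Qed.

Lemma phi_inv_spec lam t : (exists x, 0 <= x <= 1 /\ phi lam x = Finite t) ->
  0 <= phi_inv lam t <= 1 /\ phi lam (phi_inv lam t) = Finite t.
Proof.
  intro H. unfold phi_inv. destruct excluded_middle_informative as [H'|H']; [|contradiction].
  destruct constructive_indefinite_description as [x Hx]. simpl. auto.
Qed.

Lemma phi_inv_nonneg lam t : 0 <= phi_inv lam t.
Proof.
  unfold phi_inv. destruct excluded_middle_informative as [H'|H']; [|lra].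
  destruct constructive_indefinite_description as [x Hx]. simpl. lra.
Qed.

Lemma C_nonneg lam u1 u2 : 0 <= PD_copula lam u1 u2.
Proof.
  unfold PD_copula, phi_pinv. destruct (Rbar_plus _ _); try lra.
  destruct (Rbar_lt_dec _ _); [apply phi_inv_nonneg|lra].
Qed.

Lemma C_spec lam u1 u2 : 0 <= u1 <= 1 -> 0 <= u2 <= 1 ->
  PD_copula lam u1 u2 = 0 \/
  (0 < u1 /\ 0 < u2 /\ 0 < PD_copula lam u1 u2 <= 1 /\
   phi_pos lam (PD_copula lam u1 u2) = phi_pos lam u1 + phi_pos lam u2).
Proof.
  intros H1 H2. unfold PD_copula, phi_pinv.
  destruct (phi_cases lam u1 H1) as [P1|[p1 [P1 Q1]]];
  destruct (phi_cases lam u2 H2) as [P2|[p2 [P2 Q2]]]; rewrite P1, P2; simpl;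
  try (left; reflexivity).
  destruct (Rbar_lt_dec (Finite (p1 + p2)) (phi lam 0)) as [Hlt|]; [|left; reflexivity].
  unfold phi_inv; destruct excluded_middle_informative as [Hex|]; [|left; reflexivity].
  destruct constructive_indefinite_description as [x [Hx Hpx]]; simpl.
  destruct (Req_dec x 0) as [->|Hx0]; [left; reflexivity|]. right.
  assert (0 < u1).
  { destruct (Req_dec u1 0) as [E|]; [|lra]. subst. rewrite P1 in Hlt. simpl in Hlt. lra. }
  assert (0 < u2).
  { destruct (Req_dec u2 0) as [E|]; [|lra]. subst. rewrite P2 in Hlt. simpl in Hlt. lra. }
  rewrite phi_at in P1, P2, Hpx by lra. injection P1; injection P2; injection Hpx; intros.
  repeat split; lra.
Qed.

Theorem theorem3 (lam1 lam2 u1 u2 : R) :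
  lam1 < lam2 -> 0 <= u1 <= 1 -> 0 <= u2 <= 1 ->
  PD_copula lam1 u1 u2 >= PD_copula lam2 u1 u2.
Proof.
  intros Hl H1 H2.
  destruct (C_spec lam2 u1 u2 H1 H2) as [E2 | [Hu1 [Hu2 [Hx2 Hp2]]]].
  { rewrite E2. pose proof (C_nonneg lam1 u1 u2). lra. }
  set (x2 := PD_copula lam2 u1 u2) in *.
  pose proof (phi_nonneg lam2 u1 (conj Hu1 (proj2 H1))).
  pose proof (phi_nonneg lam2 u2 (conj Hu2 (proj2 H2))).
  assert (H3 : x2 <= u1).
  { apply Rnot_lt_le; intro Hq. pose proof (phi_dec lam2 u1 x2 Hu1 Hq (proj2 Hx2)). lra. }
  assert (H4 : x2 <= u2).
  { apply Rnot_lt_le; intro Hq. pose proof (phi_dec lam2 u2 x2 Hu2 Hq (proj2 Hx2)). lra. }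
  set (s := phi_pos lam1 u1 + phi_pos lam1 u2).
  assert (Hs0 : 0 <= s).
  { unfold s. pose proof (phi_nonneg lam1 u1 (conj Hu1 (proj2 H1))).
    pose proof (phi_nonneg lam1 u2 (conj Hu2 (proj2 H2))). lra. }
  assert (Hs : s <= phi_pos lam1 x2).
  { destruct (Req_dec x2 1) as [E|E].
    - assert (u1 = 1) by lra. assert (u2 = 1) by lra. unfold s. subst.
      rewrite E, !phi_pos_1. lra.
    - pose proof (ratio lam1 lam2 x2 u1 Hl (proj1 Hx2) H3 (proj2 H1)).
      pose proof (ratio lam1 lam2 x2 u2 Hl (proj1 Hx2) H4 (proj2 H2)).
      assert (0 < phi_pos lam2 x2) by (apply phi_pos_pos; lra).
      apply (Rmult_le_reg_l (phi_pos lam2 x2)); [lra|]. unfold s.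
      rewrite Hp2 at 2. nra. }
  assert (Hex : exists y, 0 <= y <= 1 /\ phi lam1 y = Finite s).
  { destruct (Req_dec s (phi_pos lam1 x2)) as [E|E].
    { exists x2. split; [lra|]. rewrite phi_at by lra. rewrite E. reflexivity. }
    destruct (Req_dec s 0) as [E'|E'].
    { exists 1. split; [lra|]. rewrite phi_at by lra. rewrite E', phi_pos_1. reflexivity. }
    destruct (Req_dec x2 1) as [E''|E''].
    { rewrite E'', phi_pos_1 in Hs. lra. }
    destruct (Ranalysis5.IVT_interv (fun z => s - phi_pos lam1 z) x2 1) as [z [Hz Hfz]].
    - intros z Hz. apply continuity_pt_minus; [apply continuity_pt_const; intros ? ?; reflexivity|].
      apply phi_cont. lra.
    - lra.
    - lra.
    - rewrite phi_pos_1. lra.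
    - exists z. split; [lra|]. rewrite phi_at by lra. f_equal. lra. }
  unfold PD_copula, phi_pinv.
  rewrite (phi_at lam1 u1 Hu1), (phi_at lam1 u2 Hu2). simpl. fold s.
  destruct (Rbar_lt_dec (Finite s) (phi lam1 0)) as [Hlt|Hnlt].
  - destruct (phi_inv_spec lam1 s Hex) as [Hr Hpr].
    set (x1 := phi_inv lam1 s) in *.
    destruct (Req_dec x1 0) as [E|E].
    { rewrite E in Hpr. rewrite Hpr in Hlt. simpl in Hlt. lra. }
    rewrite phi_at in Hpr by lra. injection Hpr; intro Hq.
    apply Rle_ge. apply Rnot_lt_le; intro H5.
    pose proof (phi_dec lam1 x1 x2 ltac:(lra) H5 (proj2 Hx2)). lra.
  - exfalso. apply Hnlt. unfold phi. destruct (Rlt_dec 0 0); [lra|].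
    destruct (Rlt_dec (-1) lam1); simpl; [|exact I].
    pose proof (phi_lt0 lam1 x2 r Hx2). lra.
Qed.
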